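(* Let $1\le j\le d$, let $\bm{x}_1,\dots,\bm{x}_{j+1}\in\mathbb{R}^d$ be affinely independent, let $\rho\in\mathbb{R}$, let $\bm{k}\in\mathbb{R}^d$, and set $\sigma_t=\bm{k}\cdot\bm{x}_t$, assumed pairwise distinct. Define $$S_t=\frac{e^{-i\sigma_t}}{\prod_{l=1,\,l\neq t}^{j+1}(\sigma_t-\sigma_l)},\qquad S=\sum_{t=1}^{j+1}S_t,$$ let $\hat B$ be the $(j+2)\times(j+2)$ Cayley–Menger matrix whose first row and first column are $(0,1,\dots,1)$ and whose entry in row $s+1$, column $t+1$ is $\|\bm{x}_s-\bm{x}_t\|^2$ ($1\le s,t\le j+1$), let $\gamma=\sqrt{(-1)^{j+1}\det(\hat B)/2^j}$ (equivalently $\gamma=j!$ times the $j$-dimensional content of the simplex), and let $$F(\bm{k})=\rho\, i^j\,\gamma\, S .$$ Then for each $p\in\{1,\dots,j+1\}$, $$\frac{\partial F(\bm{k})}{\partial \bm{x}_p}=\rho\, i^j\left(\Lambda\,\bm{k}+\Gamma\sum_{\substack{m=1\\ m\neq p}}^{j+1}A_{pm}\bm{D}_{pm}\right),$$ where $\bm{D}_{pm}=2(\bm{x}_p-\bm{x}_m)$, $A_{pm}$ is the entry of $\mathrm{adj}(\hat B)$ in the $p$-th row and $m$-th column when rows and columns are indexed starting from $0$ (i.e. the $(p+1)$-th row and $(m+1)$-th column in $1$-based indexing), $$\Lambda=\gamma\left(-i\,S_p+\sum_{t=1,\,t\neq p}^{j+1}\frac{S_t+S_p}{\sigma_t-\sigma_p}\right),\qquad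 \Gamma=\frac{(-1)^{j+1}/2^j}{\gamma}\,S .$$
   Context: $i$ is the imaginary unit. $F(\bm{k})$ is the non-uniform Fourier transform, at frequency $\bm{k}$, of the piecewise-constant function equal to $\rho$ on the $j$-simplex $\mathrm{conv}\{\bm{x}_1,\dots,\bm{x}_{j+1}\}$ and $0$ elsewhere; $\gamma$ is the content distortion factor (ratio of the simplex content to the content $1/j!$ of the unit orthogonal simplex). Derivatives with respect to $\bm{x}_p\in\mathbb{R}^d$ are gradient vectors in $\mathbb{C}^d$. *)

(* Defs.v *)
From HB Require Import structures.
From mathcomp Require Import all_boot all_order all_algebra.
From mathcomp Require Import all_classical all_reals all_analysis.
From mathcomp Require Import complex.
Set Implicit Arguments. Unset Strict Implicit. Unset Printing Implicit Defensive.
Import Order.TTheory GRing.Theory Num.Theory.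
Import numFieldNormedType.Exports.
Local Open Scope ring_scope.

Section SimplexFT.
Variables (R : realType) (d j : nat).

(* points x_1..x_{j+1} are indexed by 'I_j.+1 (0-based); vectors of R^d are row vectors *)
Definition dotv (u v : 'rV[R]_d) : R := \sum_(c < d) u 0 c * v 0 c.
Definition sqdist (u v : 'rV[R]_d) : R := \sum_(c < d) (u 0 c - v 0 c) ^+ 2.

Definition affinely_independent (x : 'I_j.+1 -> 'rV[R]_d) : bool :=
  row_free (\matrix_(t < j, c < d) (x (lift ord0 t) 0 c - x ord0 0 c)).

Definition CMmx (x : 'I_j.+1 -> 'rV[R]_d) : 'M[R]_(j.+2) :=
  \matrix_(a, b)
    match unlift ord0 a, unlift ord0 b with
    | Some s, Some t => sqdist (x s) (x t)
    | None, None => 0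
    | _, _ => 1
    end.

Definition sigma (k : 'rV[R]_d) (x : 'I_j.+1 -> 'rV[R]_d) (t : 'I_j.+1) : R :=
  dotv k (x t).

Definition cexpi (th : R) : R[i] := Complex (cos th) (sin th).

Definition S_t k x (t : 'I_j.+1) : R[i] :=
  cexpi (- sigma k x t) /
  (real_complex R (\prod_(l < j.+1 | l != t) (sigma k x t - sigma k x l))).

Definition S_sum k x : R[i] := \sum_(t < j.+1) S_t k x t.

Definition gammaCM x : R :=
  Num.sqrt ((-1) ^+ j.+1 * \det (CMmx x) / 2 ^+ j).

Definition Fhat (rho : R) k x : R[i] :=
  real_complex R rho * (Complex 0 1) ^+ j * real_complex R (gammaCM x) * S_sum k x.

Definition Lambda k x (p : 'I_j.+1) : R[i] :=
  real_complex R (gammaCM x) *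
  (- Complex 0 1 * S_t k x p +
   \sum_(t < j.+1 | t != p)
      (S_t k x t + S_t k x p) / real_complex R (sigma k x t - sigma k x p)).

Definition GammaCM k x : R[i] :=
  real_complex R ((-1) ^+ j.+1 / 2 ^+ j / gammaCM x) * S_sum k x.

(* A_{pm}: entry of adj(\hat B) at 0-based row p, column m (p, m in 1..j+1) *)
Definition Aadj x (p m : 'I_j.+1) : R := \adj (CMmx x) (lift ord0 p) (lift ord0 m).

Definition grad_rhs (rho : R) k x (p : 'I_j.+1) (c : 'I_d) : R[i] :=
  real_complex R rho * (Complex 0 1) ^+ j *
  (Lambda k x p * real_complex R (k 0 c) +
   GammaCM k x *
   real_complex R (\sum_(m < j.+1 | m != p) Aadj x p m * (2 * (x p 0 c - x m 0 c)))).

Definition xpert (x : 'I_j.+1 -> 'rV[R]_d) (p : 'I_j.+1) (c : 'I_d) (h : R)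
  : 'I_j.+1 -> 'rV[R]_d :=
  fun t => if t == p then x t + h *: delta_mx 0 c else x t.

Definition cplx_derive (f : R -> R[i]) (a : R) (l : R[i]) : Prop :=
  is_derive a 1 (fun h => complex.Re (f h)) (complex.Re l) /\
  is_derive a 1 (fun h => complex.Im (f h)) (complex.Im l).

End SimplexFT.

(* Main.v *)
Require Import Defs.
From HB Require Import structures.
From mathcomp Require Import all_boot all_order all_algebra.
From mathcomp Require Import all_classical all_reals all_analysis.
From mathcomp Require Import complex.
From mathcomp Require Import ring lra perm.
Import Order.TTheory GRing.Theory Num.Theory.
Import numFieldNormedType.Exports.
Local Open Scope ring_scope.
Local Open Scope complex_scope.

Section CD.
Context {R : realType}.
Implicit Types (f g : R -> R[i]) (a : R) (l : R[i]).

Lemma ReM (u v : R[i]) : complex.Re (u * v) = complex.Re u * complex.Re v - complex.Im u * complex.Im v.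
Proof. by case: u => ? ?; case: v => ? ?. Qed.
Lemma ImM (u v : R[i]) : complex.Im (u * v) = complex.Re u * complex.Im v + complex.Im u * complex.Re v.
Proof. by case: u => ? ?; case: v => ? ?. Qed.
Lemma ReD (u v : R[i]) : complex.Re (u + v) = complex.Re u + complex.Re v.
Proof. by case: u => ? ?; case: v => ? ?. Qed.
Lemma ImD (u v : R[i]) : complex.Im (u + v) = complex.Im u + complex.Im v.
Proof. by case: u => ? ?; case: v => ? ?. Qed.

Lemma cd_eq {f a l l'} : cplx_derive f a l -> l = l' -> cplx_derive f a l'.
Proof. by move=> ? <-. Qed.

Lemma cd_ext {f g a l} : (forall h, f h = g h) -> cplx_derive f a l -> cplx_derive g a l.
Proof. by move=> /funext ->. Qed.

Lemma cd_ext2 {f g a l} : cplx_derive f a l -> (forall h, f h = g h) -> cplx_derive g a l.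
Proof. by move=> H /funext <-. Qed.

Lemma cd_cst (w : R[i]) a : cplx_derive (fun _ => w) a 0.
Proof. by split; exact: is_derive_cst. Qed.

Lemma cd_add {f g a lf lg} : cplx_derive f a lf -> cplx_derive g a lg ->
  cplx_derive (fun h => f h + g h) a (lf + lg).
Proof.
move=> [f1 f2] [g1 g2]; split.
- have := is_deriveD f1 g1; rewrite ReD.
  by apply: near_eq_is_derive; near=> h; rewrite ReD.
- have := is_deriveD f2 g2; rewrite ImD.
  by apply: near_eq_is_derive; near=> h; rewrite ImD.
Unshelve. all: by end_near. Qed.

Lemma cd_mul {f g a lf lg} : cplx_derive f a lf -> cplx_derive g a lg ->
  cplx_derive (fun h => f h * g h) a (lf * g a + f a * lg).
Proof.
move=> [f1 f2] [g1 g2]; split.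
- have := is_deriveB (is_deriveM f1 g1) (is_deriveM f2 g2).
  move=> H; apply: (near_eq_is_derive _ (is_derive_eq H _)).
    by near=> h; rewrite ReM.
  rewrite /= ReD !ReM /GRing.scale /=; ring.
- have := is_deriveD (is_deriveM f1 g2) (is_deriveM f2 g1).
  move=> H; apply: (near_eq_is_derive _ (is_derive_eq H _)).
    by near=> h; rewrite ImM.
  rewrite /= ImD !ImM /GRing.scale /=; ring.
Unshelve. all: by end_near. Qed.

Lemma cd_rc {u : R -> R} {a du} : is_derive a 1 u du ->
  cplx_derive (fun h => (u h)%:C) a du%:C.
Proof. by move=> H; split => //=; exact: is_derive_cst. Qed.

Lemma cd_cexpi {u : R -> R} {a du} : is_derive a 1 u du ->
  cplx_derive (fun h => cexpi (u h)) a ('i * du%:C * cexpi (u a)).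
Proof.
move=> H; split => /=.
- have := is_derive1_comp (is_derive_cos (u a)) H.
  by move=> K; apply: is_derive_eq K _; rewrite /=; ring.
- have := is_derive1_comp (is_derive_sin (u a)) H.
  by move=> K; apply: is_derive_eq K _; rewrite /=; ring.
Qed.

Lemma cd_sum {I : Type} (r : seq I) (P : pred I) {F : I -> R -> R[i]} {L : I -> R[i]} {a} :
  (forall i, P i -> cplx_derive (F i) a (L i)) ->
  cplx_derive (fun h => \sum_(i <- r | P i) F i h) a (\sum_(i <- r | P i) L i).
Proof.
move=> H; elim: r => [|i r IH].
  by rewrite big_nil; apply: (cd_ext2 (cd_cst 0 a)) => h; rewrite big_nil.
rewrite big_cons; case: ifP => Pi.
  by apply: (cd_ext2 (cd_add (H i Pi) IH)) => h; rewrite big_cons Pi.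
by apply: (cd_ext2 IH) => h; rewrite big_cons Pi.
Qed.
End CD.

Section PR.
Context {R : realType}.

Lemma ide_ext {f g : R -> R} {a df : R} :
  (forall h, f h = g h) -> is_derive a 1 f df -> is_derive a 1 g df.
Proof. by move=> /funext ->. Qed.

Lemma prod_drop0 n (G : 'I_n.+1 -> R) :
  \prod_(k < n.+1 | k != ord0) G k = \prod_(k < n) G (lift ord0 k).
Proof.
rewrite big_mkcond big_ord_recl /= mul1r; apply: eq_bigr => i _.
by [].
Qed.

Lemma prod_droplift n (G : 'I_n.+1 -> R) i :
  \prod_(k < n.+1 | k != lift ord0 i) G k = G ord0 * \prod_(k < n | k != i) G (lift ord0 k).
Proof.
rewrite big_mkcond big_ord_recl /=; congr (_ * _).
by rewrite [RHS]big_mkcond; apply: eq_bigr => k _; rewrite (inj_eq lift_inj).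
Qed.

Lemma der_prod_ord n (F : 'I_n -> R -> R) (L : 'I_n -> R) (a : R) :
  (forall i, is_derive a 1 (F i) (L i)) ->
  is_derive a 1 (fun h => \prod_(i < n) F i h)
    (\sum_(i < n) L i * \prod_(k < n | k != i) F k a).
Proof.
elim: n F L => [|n IH] F L H.
  apply: (ide_ext _ (is_derive_eq (is_derive_cst (1:R) a 1) _)).
    by move=> h; rewrite big_ord0.
  by rewrite big_ord0.
have K := is_deriveM (H ord0) (IH _ _ (fun i => H (lift ord0 i))).
apply: (ide_ext _ (is_derive_eq K _)).
  by move=> h; rewrite big_ord_recl.
rewrite big_ord_recl prod_drop0 /GRing.scale /= addrC mulrC; congr (_ + _).
rewrite big_distrr /=; apply: eq_bigr => i _.
by rewrite prod_droplift; ring.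
Qed.

Lemma der_prod_ordP n (P : pred 'I_n) (F : 'I_n -> R -> R) (L : 'I_n -> R) (a : R) :
  (forall i, P i -> is_derive a 1 (F i) (L i)) ->
  (forall i, P i -> F i a != 0) ->
  is_derive a 1 (fun h => \prod_(i < n | P i) F i h)
    ((\prod_(i < n | P i) F i a) * \sum_(i < n | P i) L i / F i a).
Proof.
move=> H Hn.
have K := @der_prod_ord n (fun i h => if P i then F i h else 1)
  (fun i => if P i then L i else 0) a.
apply: (ide_ext _ (is_derive_eq (K _) _)).
- by move=> h; rewrite [RHS]big_mkcond.
- move=> i; case Pi: (P i); first exact: H.
  exact: (is_derive_cst (1:R) a (1:R)).
rewrite big_distrr [RHS]big_mkcond /=; apply: eq_bigr => i _.
case Pi: (P i); last by rewrite mul0r.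
have E : \prod_(k < n | k != i) (if P k then F k a else 1) =
    \prod_(k < n | P k && (k != i)) F k a.
  rewrite [RHS]big_mkcond [LHS]big_mkcond; apply: eq_bigr => k _.
  by case: (P k); case: (k != i).
rewrite E [in RHS](bigD1 i) //=.
have := Hn i Pi; set A := \prod_(_ < n | _) _; move=> Fi0.
by field.
Qed.

Lemma der_sum {I : Type} (r : seq I) (P : pred I) {F : I -> R -> R} {L : I -> R} {a : R} :
  (forall i, P i -> is_derive a 1 (F i) (L i)) ->
  is_derive a 1 (fun h => \sum_(i <- r | P i) F i h) (\sum_(i <- r | P i) L i).
Proof.
move=> H; elim: r => [|i r IH].
  rewrite big_nil; apply: (ide_ext _ (is_derive_cst (0:R) a 1)) => h.
  by rewrite big_nil.
rewrite big_cons; case: ifP => Pi.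
  by apply: (ide_ext _ (is_deriveD (H i Pi) IH)) => h; rewrite big_cons Pi.
by apply: (ide_ext _ IH) => h; rewrite big_cons Pi.
Qed.

Lemma der_cmul {f : R -> R} {a df : R} (k : R) :
  is_derive a 1 f df -> is_derive a 1 (fun h => k * f h) (k * df).
Proof.
move=> H; have := is_deriveM (is_derive_cst k a 1) H.
move=> K; apply: (ide_ext _ (is_derive_eq K _)) => [h //|].
by rewrite /GRing.scale /=; ring.
Qed.

Lemma cofactor_rowrep n (M : 'M[R]_n) (a : 'I_n) (v : 'I_n -> R) b :
  cofactor (\matrix_(k, l) if k == a then v l else M k l) a b = cofactor M a b.
Proof.
rewrite /cofactor; congr (_ * \det _); apply/matrixP => k l; rewrite !mxE.
by rewrite eq_sym (negbTE (neq_lift a k)).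
Qed.

Lemma der_det n (M : R -> 'M[R]_n) (D : 'M[R]_n) (t : R) :
  (forall a b, is_derive t 1 (fun h => M h a b) (D a b)) ->
  is_derive t 1 (fun h => \det (M h))
    (\sum_a \sum_b D a b * cofactor (M t) a b).
Proof.
move=> H.
have K := @der_sum _ (index_enum 'S_n) predT
  (fun (s : 'S_n) h => (-1) ^+ s * \prod_i M h i (s i))
  (fun (s : 'S_n) => (-1) ^+ s * \sum_(i < n) D i (s i) * \prod_(k < n | k != i) M t k (s k)) t
  (fun (s : 'S_n) _ => der_cmul _ (@der_prod_ord n _ _ t (fun i => H i (s i)))).
apply: (ide_ext _ (is_derive_eq K _)) => [h //|].
have E a : \sum_b D a b * cofactor (M t) a b =
   \sum_(s : 'S_n) (-1) ^+ s * (D a (s a) * \prod_(k < n | k != a) M t k (s k)).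
  pose Ma := \matrix_(k, l) if k == a then D a l else M t k l.
  transitivity (\det Ma).
    rewrite (expand_det_row _ a); apply: eq_bigr => b _.
    by rewrite cofactor_rowrep mxE eqxx.
  rewrite /determinant; apply: eq_bigr => s _; congr (_ * _).
  rewrite (bigD1 a) //= mxE eqxx; congr (_ * _); apply: eq_bigr => k /negbTE kn.
  by rewrite mxE kn.
rewrite (eq_bigr _ (fun a _ => E a)) exchange_big /=; apply: eq_bigr => s _.
by rewrite big_distrr.
Qed.
End PR.

Section CMs.
Context {R : realType} {d j : nat}.
Implicit Types (x : 'I_j.+1 -> 'rV[R]_d).

Lemma CM00 x : CMmx x ord0 ord0 = 0.
Proof. by rewrite /CMmx mxE unlift_none. Qed.
Lemma CM0l x t : CMmx x ord0 (lift ord0 t) = 1.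
Proof. by rewrite /CMmx mxE unlift_none liftK. Qed.
Lemma CMl0 x t : CMmx x (lift ord0 t) ord0 = 1.
Proof. by rewrite /CMmx mxE unlift_none liftK. Qed.
Lemma CMll x s t : CMmx x (lift ord0 s) (lift ord0 t) = sqdist (x s) (x t).
Proof. by rewrite /CMmx mxE !liftK. Qed.

Lemma sq_identity (w : 'I_j.+1 -> R) (y : 'I_j.+1 -> 'I_d -> R) :
  \sum_t w t = 0 ->
  \sum_s \sum_t w s * w t * \sum_c (y t c - y s c) ^+ 2 =
  (- 2) * \sum_c (\sum_t w t * y t c) ^+ 2.
Proof.
move=> Hw.
have E : forall s t, w s * w t * \sum_c (y t c - y s c) ^+ 2 =
   \sum_c (w s * (w t * y t c ^+ 2) + w t * (w s * y s c ^+ 2)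
           + (- 2) * ((w t * y t c) * (w s * y s c))).
  move=> s t; rewrite big_distrr /=; apply: eq_bigr => c _; ring.
rewrite (eq_bigr _ (fun s _ => eq_bigr _ (fun t _ => E s t))).
under eq_bigr do under eq_bigr do rewrite big_split /= big_split /=.
under eq_bigr do rewrite big_split /= big_split /=.
rewrite big_split /= big_split /=.
have T1 : \sum_s \sum_t \sum_c w s * (w t * y t c ^+ 2) = 0.
  under eq_bigr do under eq_bigr do rewrite -big_distrr /=.
  under eq_bigr do rewrite -big_distrr /=.
  by rewrite -big_distrl /= Hw mul0r.
have T2 : \sum_s \sum_t \sum_c w t * (w s * y s c ^+ 2) = 0.
  rewrite exchange_big /=.
  under eq_bigr do under eq_bigr do rewrite -big_distrr /=.
  under eq_bigr do rewrite -big_distrr /=.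
  by rewrite -big_distrl /= Hw mul0r.
rewrite T1 T2 !add0r.
under eq_bigr do under eq_bigr do rewrite -big_distrr /=.
under eq_bigr do rewrite -big_distrr /=.
rewrite -big_distrr /=; congr (_ * _).
under eq_bigr do rewrite exchange_big /=.
rewrite exchange_big /=; apply: eq_bigr => c _.
rewrite expr2 big_distrl /=; apply: eq_bigr => s _.
by rewrite big_distrr /=; apply: eq_bigr => t _; rewrite mulrC.
Qed.

Lemma CM_det_neq0 x : affinely_independent x -> \det (CMmx x) != 0.
Proof.
move=> Hai; apply/det0P => -[v vn0 vM].
pose z0 : R := v 0 ord0; pose w (t : 'I_j.+1) : R := v 0 (lift ord0 t).
have Eq b : \sum_a v 0 a * CMmx x a b = 0.
  by have := congr1 (fun M : 'rV[R]_j.+2 => M 0 b) vM; rewrite !mxE.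
have E1 : \sum_t w t = 0.
  apply: etrans (Eq ord0); rewrite [RHS]big_ord_recl CM00 mulr0 add0r.
  by apply: eq_bigr => t _; rewrite CMl0 mulr1.
have E2 s : z0 + \sum_t w t * sqdist (x t) (x s) = 0.
  apply: etrans (Eq (lift ord0 s)); rewrite [RHS]big_ord_recl CM0l mulr1.
  by congr (_ + _); apply: eq_bigr => t _; rewrite CMll.
have E3 : \sum_s \sum_t w s * w t * sqdist (x t) (x s) = 0.
  transitivity (\sum_s w s * (z0 + \sum_t w t * sqdist (x t) (x s)) - z0 * \sum_s w s).
    rewrite E1 mulr0 subr0.
    under [in RHS]eq_bigr do rewrite mulrDr.
    rewrite big_split /= -big_distrl /= E1 mul0r add0r.
    by apply: eq_bigr => s _; rewrite big_distrr; apply: eq_bigr => t _; rewrite -mulrA.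
  by rewrite E1 mulr0 subr0; apply: big1 => s _; rewrite E2 mulr0.
have := sq_identity w (fun t c => x t 0 c) E1.
rewrite /sqdist in E3; rewrite E3 => /esym /eqP.
rewrite mulf_eq0 oppr_eq0 pnatr_eq0 /= => /eqP H0.
have Hc c : \sum_t w t * x t 0 c = 0.
  apply/eqP; rewrite -sqrf_eq0; apply/eqP.
  by move: c isT; apply/psumr_eq0P => // c _; exact: sqr_ge0.
pose w' := \row_(t < j) w (lift ord0 t).
have Hw' : w' *m (\matrix_(t < j, c < d) (x (lift ord0 t) 0 c - x ord0 0 c)) = 0.
  apply/matrixP => i c; rewrite !mxE.
  transitivity (\sum_t w t * (x t 0 c - x ord0 0 c)).
    by rewrite big_ord_recl subrr mulr0 add0r; apply: eq_bigr => t _; rewrite !mxE.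
  under eq_bigr do rewrite mulrBr.
  by rewrite sumrB Hc -big_distrl /= E1 mul0r subrr.
move/eqP: Hw'; rewrite mulmx_free_eq0 // => /eqP w'0.
have wl t : w (lift ord0 t) = 0 by have := congr1 (fun M : 'rV[R]_j => M 0 t) w'0; rewrite !mxE.
have w0 : w ord0 = 0.
  by move: E1; rewrite big_ord_recl big1 ?addr0 // => t _; rewrite wl.
have wall t : w t = 0.
  by case: (unliftP ord0 t) => [t' ->|->]; [exact: wl|exact: w0].
have z00 : z0 = 0.
  by have := E2 ord0; rewrite big1 ?addr0 // => t _; rewrite wall mul0r.
move/eqP: vn0; apply; apply/matrixP => i a; rewrite (ord1 i) !mxE.
by case: (unliftP ord0 a) => [t ->|->]; [exact: wall|exact: z00].
Qed.
End CMs.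

Section G.
Context {R : realType} {d j : nat}.
Variables (x : 'I_j.+1 -> 'rV[R]_d) (k : 'rV[R]_d) (p : 'I_j.+1) (c : 'I_d).

Definition dl (t : 'I_j.+1) : R := (t == p)%:R.

Lemma xpert0 : xpert x p c 0 = x.
Proof. by apply/funext => t; rewrite /xpert scale0r addr0; case: eqP. Qed.

Lemma xpertE h t c' : xpert x p c h t 0 c' = x t 0 c' + h * dl t * (c' == c)%:R.
Proof.
rewrite /xpert /dl; case: eqP => _; rewrite ?mxE /=; first by rewrite mulr1.
by rewrite mulr0 mul0r addr0.
Qed.

Lemma sum_delta (f : 'I_d -> R) : \sum_c' f c' * (c' == c)%:R = f c.
Proof.
rewrite (bigD1 c) //= eqxx mulr1 big1 ?addr0 // => c' /negbTE ->.
by rewrite mulr0.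
Qed.

Lemma sum_dl (g : 'I_j.+1 -> R) : \sum_s dl s * g s = g p.
Proof.
rewrite (bigD1 p) //= /dl eqxx mul1r big1 ?addr0 // => s /negbTE ->.
by rewrite mul0r.
Qed.

Lemma sigma_pert h t : sigma k (xpert x p c h) t = sigma k x t + h * (dl t * k 0 c).
Proof.
rewrite /sigma /dotv; under eq_bigr do rewrite xpertE mulrDr.
rewrite big_split /=; congr (_ + _).
transitivity (\sum_c' (h * dl t * k 0 c') * (c' == c)%:R).
  by apply: eq_bigr => c' _; ring.
by rewrite sum_delta; ring.
Qed.

Lemma der_aff (a b : R) : is_derive (0:R) 1 (fun h => a + h * b) b.
Proof.
have K := is_deriveD (is_derive_cst a (0:R) (1:R))
  (is_deriveM (@is_derive_id R R 0 1) (is_derive_cst b (0:R) (1:R))).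
apply: (ide_ext _ (is_derive_eq K _)) => [h //|].
by rewrite /GRing.scale /=; ring.
Qed.

Lemma der_quad (a b e : R) : is_derive (0:R) 1 (fun h => a + h * b + h ^+ 2 * e) b.
Proof.
have K := is_deriveD (der_aff a b)
  (is_deriveM (is_deriveX 2 (@is_derive_id R R 0 1)) (is_derive_cst e (0:R) (1:R))).
apply: (ide_ext _ (is_derive_eq K _)) => [h //|].
by rewrite /GRing.scale /=; ring.
Qed.

Lemma sqdist_pert h s t :
  sqdist (xpert x p c h s) (xpert x p c h t) =
  sqdist (x s) (x t) + h * (2 * (x s 0 c - x t 0 c) * (dl s - dl t))
  + h ^+ 2 * (dl s - dl t) ^+ 2.
Proof.
rewrite /sqdist; under eq_bigr do rewrite !xpertE.
transitivity (\sum_c' ((x s 0 c' - x t 0 c') ^+ 2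
   + h * (2 * (x s 0 c' - x t 0 c') * (dl s - dl t) * (c' == c)%:R)
   + h ^+ 2 * ((dl s - dl t) ^+ 2 * (c' == c)%:R))).
  by apply: eq_bigr => c' _; case: (c' == c); rewrite /=; ring.
rewrite big_split big_split /= -!big_distrr /=.
rewrite sum_delta.
have -> : \sum_(i < d) (i == c)%:R = 1 :> R.
  by rewrite -[RHS](sum_delta (fun=> 1)); apply: eq_bigr => i _; rewrite mul1r.
by rewrite mulr1.
Qed.

Definition Dm (a b : 'I_j.+2) : R :=
  match unlift ord0 a, unlift ord0 b with
  | Some s, Some t => 2 * (x s 0 c - x t 0 c) * (dl s - dl t)
  | _, _ => 0 end.

Lemma der_CM a b : is_derive (0:R) 1 (fun h => CMmx (xpert x p c h) a b) (Dm a b).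
Proof.
rewrite /Dm; case: (unliftP ord0 a) => [s ->|->]; case: (unliftP ord0 b) => [t ->|->];
  rewrite ?liftK ?unlift_none.
- by apply: (ide_ext _ (der_quad _ _ _)) => h; rewrite CMll sqdist_pert.
- by apply: (ide_ext _ (is_derive_cst (1:R) (0:R) (1:R))) => h; rewrite CMl0.
- by apply: (ide_ext _ (is_derive_cst (1:R) (0:R) (1:R))) => h; rewrite CM0l.
- by apply: (ide_ext _ (is_derive_cst (0:R) (0:R) (1:R))) => h; rewrite CM00.
Qed.

Lemma CM_tr : (CMmx x)^T = CMmx x.
Proof.
apply/matrixP => a b; rewrite mxE.
case: (unliftP ord0 a) => [s ->|->]; case: (unliftP ord0 b) => [t ->|->];
  rewrite ?CMll ?CMl0 ?CM0l ?CM00 //.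
rewrite /sqdist; apply: eq_bigr => c' _; ring.
Qed.

Lemma cof_sym a b : cofactor (CMmx x) a b = cofactor (CMmx x) b a.
Proof. by rewrite -{1}CM_tr cofactor_tr. Qed.

Definition Gsum : R :=
  \sum_(m < j.+1 | m != p) Aadj x p m * (2 * (x p 0 c - x m 0 c)).

Lemma der_detCM :
  is_derive (0:R) 1 (fun h => \det (CMmx (xpert x p c h))) (2 * Gsum).
Proof.
have HD : forall a b, is_derive (0:R) 1 (fun h => CMmx (xpert x p c h) a b)
   ((\matrix_(a, b) Dm a b) a b) by move=> a b; rewrite mxE; exact: der_CM.
have K := @der_det _ j.+2 _ _ _ HD; rewrite xpert0 in K.
apply: (is_derive_eq K).
under eq_bigr do under eq_bigr do rewrite mxE.
rewrite big_ord_recl big1 => [|b _]; last by rewrite /Dm unlift_none mul0r.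
rewrite add0r.
under eq_bigr do rewrite big_ord_recl {1}/Dm liftK unlift_none /= mul0r add0r.
pose C s t := cofactor (CMmx x) (lift ord0 s) (lift ord0 t).
pose f (s t : 'I_j.+1) := 2 * (x s 0 c - x t 0 c).
transitivity (\sum_s \sum_t (dl s * (f s t * C s t)) - \sum_s \sum_t (dl t * (f s t * C s t))).
  rewrite -sumrB; apply: eq_bigr => s _; rewrite -sumrB; apply: eq_bigr => t _.
  by rewrite /Dm !liftK /f /C; ring.
have E1 : \sum_s \sum_t dl s * (f s t * C s t) = \sum_t f p t * C p t.
  by under eq_bigr do rewrite -big_distrr; rewrite sum_dl.
have E2 : \sum_s \sum_t dl t * (f s t * C s t) = \sum_s f s p * C s p.
  by rewrite exchange_big /=; under eq_bigr do rewrite -big_distrr; rewrite sum_dl.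
rewrite E1 E2.
have -> : \sum_s f s p * C s p = - \sum_s f p s * C p s.
  rewrite -sumrN; apply: eq_bigr => s _; rewrite /f /C cof_sym; ring.
rewrite opprK (bigD1 p) //= /f subrr mulr0 mul0r add0r /Gsum.
have -> : \sum_(i < j.+1 | i != p) 2 * (x p 0 c - x i 0 c) * C p i =
    \sum_(m < j.+1 | m != p) Aadj x p m * (2 * (x p 0 c - x m 0 c)).
  by apply: eq_bigr => m _; rewrite /Aadj /adjugate mxE /C cof_sym mulrC.
by rewrite mulrDl mul1r.
Qed.
End G.

Section G2.
Context {R : realType} {d j : nat}.
Variables (x : 'I_j.+1 -> 'rV[R]_d) (p : 'I_j.+1) (c : 'I_d).

Definition qf (h : R) : R := (-1) ^+ j.+1 * \det (CMmx (xpert x p c h)) / 2 ^+ j.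
Definition dq : R := (-1) ^+ j.+1 * (2 * Gsum x p c) / 2 ^+ j.

Lemma der_q : is_derive (0:R) 1 qf dq.
Proof.
have K := der_cmul ((-1) ^+ j.+1 / 2 ^+ j) (der_detCM x p c).
apply: (ide_ext _ (is_derive_eq K _)) => [h|]; rewrite /qf /dq; ring.
Qed.

Lemma der_gamma : affinely_independent x ->
  is_derive (0:R) 1 (fun h => gammaCM (xpert x p c h))
    ((2 * Num.sqrt (qf 0))^-1 * dq).
Proof.
move=> Hai.
have q0 : qf 0 != 0.
  rewrite /qf xpert0 !mulf_neq0 ?invr_eq0 ?expf_neq0 ?oppr_eq0 ?oner_eq0 ?pnatr_eq0 //.
  exact: CM_det_neq0.
have [qlt|qgt|qeq] := ltgtP (qf 0) 0; last by rewrite qeq eqxx in q0.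
- rewrite ltr0_sqrtr // mulr0 invr0 mul0r.
  apply: (near_eq_is_derive _ (is_derive_cst (0:R) (0:R) (1:R))).
  have := der_q; case=> /derivable1_diffP/differentiable_continuous Hc _.
  have Hn : \forall t \near (0:R), qf t < 0 := @cvgr_lt R R (nbhs (0:R)) _ qf (qf 0) Hc 0 qlt.
  near=> h; rewrite /gammaCM ltr0_sqrtr //.
  near: h; exact: Hn.
- have K := is_derive1_comp (is_derive1_sqrt qgt) der_q.
  by apply: (ide_ext _ K) => h.
Unshelve. all: by end_near. Qed.
End G2.

Section S.
Context {R : realType} {d j : nat}.
Variables (x : 'I_j.+1 -> 'rV[R]_d) (k : 'rV[R]_d) (p : 'I_j.+1) (c : 'I_d).
Hypothesis Hs : forall s t : 'I_j.+1, s != t -> sigma k x s != sigma k x t.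

Local Notation sg := (sigma k x).
Local Notation e t := (dl p t * k 0 c).

Lemma der_sig t : is_derive (0:R) 1 (fun h => sigma k (xpert x p c h) t) (e t).
Proof. by apply: (ide_ext _ (der_aff _ _)) => h; rewrite sigma_pert. Qed.

Definition Pt t : R := \prod_(l < j.+1 | l != t) (sg t - sg l).
Definition st t : R := \sum_(l < j.+1 | l != t) (e t - e l) / (sg t - sg l).

Lemma Pt_neq0 t : Pt t != 0.
Proof.
by apply/prodf_neq0 => l lt; rewrite subr_eq0; apply: Hs; rewrite eq_sym.
Qed.

Lemma der_P t : is_derive (0:R) 1
  (fun h => \prod_(l < j.+1 | l != t) (sigma k (xpert x p c h) t - sigma k (xpert x p c h) l))
  (Pt t * st t).
Proof.
have K := @der_prod_ordP _ j.+1 (fun l => l != t)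
  (fun l h => sigma k (xpert x p c h) t - sigma k (xpert x p c h) l)
  (fun l => e t - e l) 0 (fun l _ => is_deriveB (der_sig t) (der_sig l)).
rewrite xpert0 in K; apply: K => l lt.
by rewrite subr_eq0; apply: Hs; rewrite eq_sym.
Qed.

Lemma cd_St t : cplx_derive (fun h => S_t k (xpert x p c h) t) 0
  (S_t k x t * (- 'i * (e t)%:C - (st t)%:C)).
Proof.
have K1 := @cd_cexpi _ (fun h => - sigma k (xpert x p c h) t) 0 _ (is_deriveN (der_sig t)).
have Pne : \prod_(l < j.+1 | l != t)
   (sigma k (xpert x p c 0) t - sigma k (xpert x p c 0) l) != 0.
  by rewrite xpert0; exact: Pt_neq0.
have K2 := cd_rc (is_deriveV Pne (der_P t)).
have := cd_mul K1 K2.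
rewrite /= xpert0 => K.
apply: (cd_ext2 (cd_eq K _)) => [|h]; last first.
  by rewrite /S_t fmorphV.
rewrite /S_t -/(Pt t).
have -> : - (Pt t) ^- 2 *: (Pt t * st t) = - ((Pt t)^-1 * st t).
  by rewrite /GRing.scale /=; field; exact: Pt_neq0.
rewrite !(rmorphN, rmorphM, fmorphV) /=.
move: (cexpi (- sg t)) ((Pt t)%:C^-1) ((st t)%:C) ((dl p t)%:C) ((k 0 c)%:C) ('i : R[i]) => E0 P0 S0 D0 K0 I0.
ring.
Qed.

Lemma st_p : st p = - \sum_(l < j.+1 | l != p) k 0 c / (sg l - sg p).
Proof.
rewrite /st -sumrN; apply: eq_bigr => l lp.
rewrite /dl eqxx (negbTE lp) -[sg p - sg l]opprB invrN /=; ring.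
Qed.

Lemma st_t t : t != p -> st t = - (k 0 c / (sg t - sg p)).
Proof.
move=> tp; rewrite /st (bigD1 p) 1?eq_sym //= big1 ?addr0.
  by rewrite /dl eqxx (negbTE tp) /=; ring.
move=> l /andP[lt lp]; rewrite /dl (negbTE tp) (negbTE lp) /=; ring.
Qed.

Lemma sum_alg :
  \sum_t S_t k x t * (- 'i * (e t)%:C - (st t)%:C) =
  (k 0 c)%:C * (- 'i * S_t k x p +
     \sum_(t < j.+1 | t != p) (S_t k x t + S_t k x p) / (sg t - sg p)%:C).
Proof.
rewrite (bigD1 p) //= st_p /dl eqxx mul1r.
under eq_bigr => t tp do rewrite st_t // (negbTE tp) mul0r.
rewrite rmorphN opprK rmorph_sum mulrDr big_distrr /= mulrDr -addrA.
congr (_ + _).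
  move: (S_t k x p) ((k 0 c)%:C) ('i : R[i]) => A0 B0 I0; ring.
rewrite -big_split /= big_distrr /=; apply: eq_bigr => t _.
rewrite !(rmorphN, rmorphM, fmorphV, rmorph0) /=.
move: (S_t k x p) (S_t k x t) ((k 0 c)%:C) ('i : R[i]) ((sg t - sg p)%:C^-1) => A0 B0 C0 I0 D0.
ring.
Qed.

Lemma cd_Ssum : cplx_derive (fun h => S_sum k (xpert x p c h)) 0
  ((k 0 c)%:C * (- 'i * S_t k x p +
     \sum_(t < j.+1 | t != p) (S_t k x t + S_t k x p) / (sg t - sg p)%:C)).
Proof.
rewrite -sum_alg.
apply: (cd_ext2 (cd_sum _ _ (fun t _ => cd_St t))) => h.
by rewrite /S_sum.
Qed.
End S.

Theorem proposition2 (R : realType) (d j : nat) :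
  (1 <= j)%N -> (j <= d)%N ->
  forall (x : 'I_j.+1 -> 'rV[R]_d) (rho : R) (k : 'rV[R]_d),
  affinely_independent x ->
  (forall s t : 'I_j.+1, s != t -> sigma k x s != sigma k x t) ->
  forall (p : 'I_j.+1) (c : 'I_d),
  cplx_derive (fun h : R => Fhat rho k (xpert x p c h)) 0 (grad_rhs rho k x p c).
Proof.
move=> _ _ x rho k Hai Hs p c.
have Kg := cd_rc (der_gamma x p c Hai).
have K := cd_mul (cd_mul (cd_cst ((rho)%:C * 'i ^+ j) 0) Kg) (cd_Ssum x k p c Hs).
apply: (cd_ext2 (cd_eq K _)) => [|h]; last by rewrite /Fhat.
rewrite /= xpert0 /grad_rhs /Lambda /GammaCM -/(Gsum x p c).
have -> : (2 * Num.sqrt (qf x p c 0))^-1 * dq x p c =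
   (-1) ^+ j.+1 / 2 ^+ j / gammaCM x * Gsum x p c.
  rewrite /qf /dq xpert0 -/(gammaCM x) invfM.
  move: (gammaCM x)^-1 => g.
  by field; rewrite ?expf_neq0 ?pnatr_eq0.
rewrite !(rmorphM, fmorphV) /=.
have Ei : ('i%R : R[i]) = Complex 0 1 by [].
rewrite Ei.
set W := \sum_(t < j.+1 | t != p) _.
move: W (S_t k x p) (S_sum k x) ((gammaCM x)%:C) (((-1) ^+ j.+1)%:C)
  ((2 ^+ j)%:C) ((Gsum x p c)%:C) ((k 0 c)%:C) (rho%:C) ('i : R[i])
  => W0 A0 B0 C0 D0 E0 F0 G0 H0 I0.
ring.
Qed.
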